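(* Every rectangular permutation $\pi$ can be expressed uniquely as $\pi=\psi_{x_m}\circ\cdots\circ\psi_{x_1}(e_0)$ for some $m\ge0$ and letters $x_1,\dots,x_m\in\{1,2,u,d\}$, where each operator $\psi_{x_j}$ is applied to a permutation in its domain.
   Context: A permutation is rectangular if it avoids the patterns $2413,2431,4213,4231$; $e_0$ is the empty permutation (size $0$). For $\pi\in S_n$ (one-line form) and $1\le i,j\le n+1$, $\rho_{i,j}(\pi)\in S_{n+1}$ is obtained by increasing by $1$ every entry $\ge i$ and inserting the value $i$ at position $j$. Operators: $\psi_1=\rho_{1,1}$, domain all rectangular permutations (including $e_0$); $\psi_2=\rho_{1,2}$, domain rectangular $\pi$ of size $\ge1$ with $\pi_1\ne1$; $\psi_u(\pi)=\rho_{\pi_1,1}(\pi)$, same domain as $\psi_2$; $\psi_d(\pi)=\rho_{\pi_1+1,1}(\pi)$, domain rectangular $\pi$ of size $\ge1$. *)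

(* Defs.v *)
From mathcomp Require Import all_boot.
Set Implicit Arguments. Unset Strict Implicit. Unset Printing Implicit Defensive.

Definition is_perm (s : seq nat) : bool := perm_eq s (iota 1 (size s)).

Definition order_iso (t p : seq nat) : bool :=
  (size t == size p) &&
  all (fun i => all (fun j => (nth 0 t i < nth 0 t j) == (nth 0 p i < nth 0 p j))
                    (iota 0 (size p))) (iota 0 (size p)).

Definition contains (s p : seq nat) : Prop :=
  exists t, subseq t s /\ order_iso t p.

Definition avoids (s p : seq nat) : Prop := ~ contains s p.

Definition rectangular (s : seq nat) : Prop :=
  is_perm s /\ avoids s [:: 2; 4; 1; 3] /\ avoids s [:: 2; 4; 3; 1]
            /\ avoids s [:: 4; 2; 1; 3] /\ avoids s [:: 4; 2; 3; 1].

(* rho_{i,j}(pi): increase by 1 every entry >= i, then insert value i at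
   (1-indexed) position j. *)
Definition rho (i j : nat) (pi : seq nat) : seq nat :=
  let pi' := map (fun x => if i <= x then x.+1 else x) pi in
  take j.-1 pi' ++ i :: drop j.-1 pi'.

Inductive letter := L1 | L2 | Lu | Ld.

(* first entry pi_1 (only used when size pi >= 1) *)
Definition first (pi : seq nat) : nat := head 0 pi.

Definition psi (x : letter) (pi : seq nat) : seq nat :=
  match x with
  | L1 => rho 1 1 pi
  | L2 => rho 1 2 pi
  | Lu => rho (first pi) 1 pi
  | Ld => rho (first pi).+1 1 pi
  end.

Definition in_dom (x : letter) (pi : seq nat) : Prop :=
  match x with
  | L1 => rectangular pi
  | L2 => rectangular pi /\ 1 <= size pi /\ first pi != 1
  | Lu => rectangular pi /\ 1 <= size pi /\ first pi != 1
  | Ld => rectangular pi /\ 1 <= size pi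
  end.

(* word_gives [:: x_1; ...; x_m] pi target  <->
   psi_{x_m} o ... o psi_{x_1} (pi) = target, each operator applied
   to a permutation in its domain. *)
Fixpoint word_gives (w : seq letter) (pi target : seq nat) : Prop :=
  match w with
  | [::] => pi = target
  | x :: w' => in_dom x pi /\ word_gives w' (psi x pi) target
  end.

(* Main.v *)
Require Import Defs.
From mathcomp Require Import all_boot zify.
Set Implicit Arguments. Unset Strict Implicit. Unset Printing Implicit Defensive.

Definition inc (c x : nat) := if c <= x then x.+1 else x.
Definition dec (c x : nat) := if c < x then x.-1 else x.

Lemma is_permP s : is_perm s <-> uniq s /\ (forall x, x \in s -> 0 < x <= size s).
Proof.
split.
  move=> H; split; first by rewrite (perm_uniq H) iota_uniq.
  by move=> x; rewrite (perm_mem H) mem_iota add1n ltnS.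
move=> [U A]; rewrite /is_perm.
have sub : {subset s <= iota 1 (size s)}.
  by move=> x /A; rewrite mem_iota add1n ltnS.
have sz : size (iota 1 (size s)) <= size s by rewrite size_iota.
have [_ E] := uniq_min_size U sub sz.
by apply: uniq_perm => //; apply: iota_uniq.
Qed.

Lemma perm_memE s x : is_perm s -> (x \in s) = (0 < x <= size s).
Proof. by move=> H; rewrite (perm_mem H) mem_iota add1n ltnS. Qed.

Lemma remove_perm l c r : is_perm (l ++ c :: r) ->
  is_perm (map (dec c) (l ++ r)) /\ map (inc c) (map (dec c) (l ++ r)) = l ++ r.
Proof.
move=> H; have /is_permP [U A] := H.
have Uc : uniq (c :: (l ++ r)) by by rewrite -cat1s -uniq_catCA.
move: Uc => /= /andP [cn U2].
have Ac : 0 < c <= (size (l ++ r)).+1.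
  by have := A c; rewrite mem_cat inE eqxx orbT size_cat /= addnS size_cat; apply.
have Ax : forall x, x \in l ++ r -> [/\ 0 < x, x <= (size (l ++ r)).+1 & x != c].
  move=> x xin; have := A x; rewrite !mem_cat inE size_cat /= addnS -size_cat.
  move: xin; rewrite mem_cat => /orP [] xin; rewrite xin ?orbT => /(_ isT) /andP [h1 h2];
  (split => //; apply/eqP => e; move: cn; rewrite -e mem_cat xin ?orbT //).
split.
  apply/is_permP; split.
    rewrite map_inj_in_uniq // => x y xi yi; rewrite /dec.
    have [? ? /eqP ?] := Ax x xi; have [? ? /eqP ?] := Ax y yi.
    case: ifP; case: ifP; lia.
  move=> y /mapP [x xi ->]; rewrite size_map /dec.
  have [? ? /eqP ?] := Ax x xi; case: ifP; lia.
rewrite -map_comp; apply: map_id_in => x xi /=; rewrite /inc /dec.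
have [? ? /eqP ?] := Ax x xi; case: ifP; case: ifP; lia.
Qed.

Lemma nth_inc c t i : 0 < c -> nth 0 (map (inc c) t) i = inc c (nth 0 t i).
Proof.
move=> c0; elim: t i => [|x t IH] [|i] //=; rewrite /inc; case: ifP => //; lia.
Qed.

Lemma ltn_inc c x y : (inc c x < inc c y) = (x < y).
Proof. rewrite /inc; case: ifP; case: ifP => ? ?; apply/idP/idP; lia. Qed.

Lemma order_iso_inc c t p : 0 < c -> order_iso (map (inc c) t) p = order_iso t p.
Proof.
move=> c0; rewrite /order_iso size_map; congr (_ && _).
apply: eq_all => i; apply: eq_all => j; by rewrite !nth_inc // ltn_inc.
Qed.

Lemma rect_remove l c r : rectangular (l ++ c :: r) ->
  rectangular (map (dec c) (l ++ r)).
Proof.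
move=> [P [A1 [A2 [A3 A4]]]].
have [P' E] := remove_perm P.
have c0 : 0 < c.
  by move/is_permP: P => [_ /(_ c)]; rewrite mem_cat inE eqxx orbT => /(_ isT) /andP [].
have H : forall p, avoids (l ++ c :: r) p -> avoids (map (dec c) (l ++ r)) p.
  move=> p Av [t [st ot]]; apply: Av; exists (map (inc c) t); split; last by rewrite order_iso_inc.
  apply: subseq_trans (map_subseq (inc c) st) _; rewrite E.
  by apply: cat_subseq => //; apply: subseq_cons.
by split => //; split; [apply: H | split; [apply: H | split; apply: H]].
Qed.

Lemma rho_remove l c r : is_perm (l ++ c :: r) ->
  rho c (size l).+1 (map (dec c) (l ++ r)) = l ++ c :: r.
Proof.
move=> P; have [_ E] := remove_perm P; rewrite /rho /=.
change (map (fun x => if c <= x then x.+1 else x)) with (map (inc c)).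
by rewrite E take_size_cat // drop_size_cat.
Qed.

Lemma two_subseq (x y : nat) s : x \in s -> y \in s -> x != y ->
  subseq [:: x; y] s \/ subseq [:: y; x] s.
Proof.
elim: s => [|z s IH] //= xi yi xy.
case: (eqVneq z x) => [zx|zx].
  subst z; left; rewrite /= ?eqxx sub1seq.
  by move: yi; rewrite inE eq_sym (negPf xy).
case: (eqVneq z y) => [zy|zy].
  subst z; right; rewrite /= ?eqxx sub1seq.
  by move: xi; rewrite inE eq_sym (negPf zx).
move: xi yi; rewrite !inE eq_sym (negPf zx) eq_sym (negPf zy) /= => xi yi.
by case: (IH xi yi xy) => h; [left|right]; move: (subseq_trans h (subseq_cons s z)) => /=.
Qed.

Ltac oiso := rewrite /order_iso /=;
  repeat (apply/andP; split); apply/eqP; apply/idP/idP; lia.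

Lemma bad_case a b s : rectangular [:: a, b & s] -> 2 <= a -> 2 <= b ->
  b != a.+1 -> a != b.+1 -> False.
Proof.
move=> [P [A1 [A2 [A3 A4]]]] a2 b2 h1 h2.
have U : uniq [:: a, b & s] by case/is_permP: P.
move: (U) => /= /andP [] ; rewrite inE negb_or => /andP [ab _] /andP [bs _].
have mem x : 0 < x <= (size s).+2 -> x != a -> x != b -> x \in s.
  by move=> h xa xb; move: h; rewrite -(perm_memE _ P) !inE (negPf xa) (negPf xb).
have bl : b <= (size s).+2 by case/is_permP: P => _ /(_ b); rewrite !inE eqxx orbT => /(_ isT) /andP [].
have al : a <= (size s).+2 by case/is_permP: P => _ /(_ a); rewrite !inE eqxx => /(_ isT) /andP [].
have one_s : 1 \in s by apply: mem; lia.
case: (ltnP a b) => lab.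
  have ps : a.+1 \in s by apply: mem; lia.
  have n1 : 1 != a.+1 by lia.
  case: (two_subseq one_s ps n1) => sub.
    apply: A1; exists [:: a; b; 1; a.+1]; split; first by apply: (cat_subseq (subseq_refl [:: a; b]) sub).
    oiso.
  apply: A2; exists [:: a; b; a.+1; 1]; split; first by apply: (cat_subseq (subseq_refl [:: a; b]) sub).
  oiso.
have ps : b.+1 \in s by apply: mem; lia.
have n1 : 1 != b.+1 by lia.
case: (two_subseq one_s ps n1) => sub.
  apply: A3; exists [:: a; b; 1; b.+1]; split; first by apply: (cat_subseq (subseq_refl [:: a; b]) sub).
  oiso.
apply: A4; exists [:: a; b; b.+1; 1]; split; first by apply: (cat_subseq (subseq_refl [:: a; b]) sub).
oiso.
Qed.

Lemma size_psi x q : size (psi x q) = (size q).+1.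
Proof.
by case: x; rewrite /psi /rho size_cat /= addnS -size_cat cat_take_drop size_map.
Qed.

Lemma decomp s : rectangular s -> 0 < size s ->
  exists x q, in_dom x q /\ psi x q = s.
Proof.
case: s => [|a t] // R _.
have P := R.1.
have a0 : 0 < a <= (size t).+1 by rewrite -(perm_memE _ P) inE eqxx.
case: (eqVneq a 1) => [a1|a1].
  subst a; exists L1, (map (dec 1) ([::] ++ t)); split.
    by apply: (rect_remove (l:=[::])).
  by rewrite /psi (rho_remove (l:=[::])).
case: t R P a0 => [|b s] R P a0; first by move: a0 => /=; lia.
have b0 : 0 < b <= (size s).+2 by rewrite -(perm_memE _ P) !inE eqxx orbT.
have ab : a != b.
  by case/is_permP: P => /= /andP []; rewrite inE negb_or => /andP [].
case: (eqVneq b a.+1) => [ba|ba].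
  exists Lu, (map (dec a) ([::] ++ b :: s)).
  have fq : first (map (dec a) ([::] ++ b :: s)) = a by rewrite /= /dec; case: ifP => //; lia.
  split.
    split; first by apply: (rect_remove (l:=[::])).
    by rewrite fq /=; split.
  by rewrite /psi fq (rho_remove (l:=[::])).
case: (eqVneq a b.+1) => [ab1|ab1].
  exists Ld, (map (dec a) ([::] ++ b :: s)).
  have fq : first (map (dec a) ([::] ++ b :: s)) = b by rewrite /= /dec; case: ifP => //; lia.
  split.
    split; first by apply: (rect_remove (l:=[::])).
    by [].
  by rewrite /psi fq -ab1 (rho_remove (l:=[::])).
case: (eqVneq b 1) => [b1|b1].
  exists L2, (map (dec 1) ([:: a] ++ s)).
  have fq : first (map (dec 1) ([:: a] ++ s)) = a.-1.
    by rewrite /= /dec; case: ifP => //; lia.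
  split.
    split; first by rewrite b1 in R; apply: (rect_remove (l:=[:: a])).
    by rewrite fq /=; split => //; apply/eqP; lia.
  by rewrite /psi b1 (rho_remove (l:=[:: a])) // -b1.
exfalso; apply: (bad_case R) => //; lia.
Qed.

Lemma word_cat w1 w2 p t :
  word_gives (w1 ++ w2) p t <-> exists q, word_gives w1 p q /\ word_gives w2 q t.
Proof.
elim: w1 p => [|x w1 IH] p /=.
  by split; [move=> h; exists p | move=> [q [-> h]]].
split.
  by move=> [d /IH [q [h1 h2]]]; exists q.
by move=> [q [[d h1] h2]]; split => //; apply/IH; exists q.
Qed.

Lemma word_rcons w x p t :
  word_gives (rcons w x) p t <-> exists q, word_gives w p q /\ in_dom x q /\ psi x q = t.
Proof.
rewrite -cats1 word_cat /=; split.
  by move=> [q [h1 [h2 h3]]]; exists q.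
by move=> [q [h1 [h2 h3]]]; exists q.
Qed.

Lemma word_size w p t : word_gives w p t -> size t = size p + size w.
Proof.
elim: w p => [|x w IH] p /=; first by move=> ->; rewrite addn0.
by move=> [_ /IH ->]; rewrite size_psi addnS.
Qed.

Lemma dom_rect x q : in_dom x q -> rectangular q.
Proof. by case: x => //= [[]|[]|[]]. Qed.

Lemma inc_inj c : injective (inc c).
Proof. move=> x y; rewrite /inc; case: ifP; case: ifP; lia. Qed.

Lemma psi_L1 q : psi L1 q = 1 :: map (inc 1) q.
Proof. by rewrite /psi /rho take0 drop0. Qed.
Lemma psi_L2 a s : psi L2 (a::s) = inc 1 a :: 1 :: map (inc 1) s.
Proof. by rewrite /psi /rho /= take0 drop0. Qed.
Lemma psi_Lu a s : psi Lu (a::s) = a :: a.+1 :: map (inc a) s.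
Proof. by rewrite /psi /rho /= /inc leqnn. Qed.
Lemma psi_Ld a s : psi Ld (a::s) = a.+1 :: a :: map (inc a.+1) s.
Proof. by rewrite /psi /rho /= /inc ltnn. Qed.

Lemma psi_inj x x' q q' : in_dom x q -> in_dom x' q' -> psi x q = psi x' q' ->
  x = x' /\ q = q'.
Proof.
move=> D D'.
have P := (dom_rect D).1; have P' := (dom_rect D').1.
have pos : forall a s, is_perm (a :: s) -> 0 < a.
  by move=> a s /perm_memE -/(_ a); rewrite inE eqxx => /esym /andP [].
have ne : forall y r, in_dom y r -> y <> L1 -> exists a s, r = a :: s.
  move=> y [|a s]; last by exists a, s.
  by case: y => [_ /(_ erefl) []|[_ []]|[_ []]|[_ []]].
have inc1 : forall a, 0 < a -> inc 1 a = a.+1 by move=> a; rewrite /inc => ->.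
case: x D => D.
- case: x' D' => D'; rewrite psi_L1.
  + by rewrite psi_L1 => -[] /(inj_map (@inc_inj 1)) ->.
  + have [a' [s' E]] := ne _ _ D' ltac:(by []); subst q'.
    have pa' := pos _ _ P'; rewrite psi_L2 inc1 //; case => *; exfalso; lia.
  + have [a' [s' E]] := ne _ _ D' ltac:(by []); subst q'.
    rewrite psi_Lu; case => *; move: D' => [_ [_ /eqP]] /= *; exfalso; lia.
  + have [a' [s' E]] := ne _ _ D' ltac:(by []); subst q'.
    have pa' := pos _ _ P'; rewrite psi_Ld; case => *; exfalso; lia.
all: have [a [s E]] := ne _ _ D ltac:(by []); subst q; have pa := pos _ _ P.
all: case: x' D' => D'.
all: try (have [a' [s' E']] := ne _ _ D' ltac:(by []); subst q'; have pa' := pos _ _ P').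
all: rewrite ?psi_L1 ?psi_L2 ?psi_Lu ?psi_Ld ?inc1 //.
all: move: D D' => /= D D'.
all: first [ (case => *; exfalso; lia)
           | (case => *; exfalso; case: D => _ [_ /eqP ?]; lia)
           | (case => *; exfalso; case: D' => _ [_ /eqP ?]; lia)
           | (case => *; subst; split => //; congr (_ :: _);
              match goal with H : map (inc ?c) _ = map (inc ?c) _ |- _ =>
                exact: (inj_map (@inc_inj c) H) end) ].
Qed.

Lemma exists_word n : forall s, size s <= n -> rectangular s ->
  exists w, word_gives w [::] s.
Proof.
elim: n => [|n IH] s.
  by case: s => // _ _; exists [::].
case: s => [|a t] sz R; first by exists [::].
have [x [q [D E]]] := decomp R isT.
have sq : size q <= n by move: sz; rewrite -E size_psi.
have [w W] := IH q sq (dom_rect D).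
by exists (rcons w x); apply/word_rcons; exists q.
Qed.

Lemma word_unique w : forall w' s, word_gives w [::] s -> word_gives w' [::] s -> w = w'.
Proof.
elim/last_ind: w => [|w x IH] w' s.
  move=> /= <- /word_size /= H; case: w' H => // y r /= H; exfalso; lia.
move=> /word_rcons [q [W [D E]]].
case/lastP: w' => [|w' x'].
  by move=> /= es; move: E; rewrite -es => /(f_equal size); rewrite size_psi.
move=> /word_rcons [q' [W' [D' E']]].
have [ex eq] := psi_inj D D' (etrans E (esym E')); subst x' q'.
by rewrite (IH w' q W W').
Qed.

Theorem corollary4p3 (pi : seq nat) :
  rectangular pi -> exists! w : seq letter, word_gives w [::] pi.
Proof.
move=> R; have [w W] := exists_word (leqnn (size pi)) R.
exists w; split => // w' W'; exact: word_unique W W'.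
Qed.
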